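(* Let $k=\mathbb R$ or $\mathbb C$, let $(E,g)$ be a finite-dimensional inner product vector space over $k$, let $f\in\operatorname{End}_k(E)$, and let $\mathcal H_f=\{H_1,\dots,H_n\}$ be a family of $f$-invariant subspaces of $E$ with $E=H_1\oplus\dots\oplus H_n$ and $H_i\subseteq\big[\sum_{j\ne i}H_j\big]^\perp$ for all $i\in\{1,\dots,n\}$. Then $f^+_{\mathcal H_f}=f^\dagger$.
   Context: An inner product is linear in the first argument, conjugate-symmetric and positive definite; $U^\perp=\{e\in E:g(u,e)=0\ \forall u\in U\}$. For $f\in\operatorname{End}_k(E)$, its Moore-Penrose inverse $f^\dagger\in\operatorname{End}_k(E)$ is the linear map equal to $(f|_{[\operatorname{Ker} f]^\perp})^{-1}$ on $\operatorname{Im} f$ and to $0$ on $[\operatorname{Im} f]^\perp$. With $f_i=f|_{H_i}\in\operatorname{End}_k(H_i)$ and $H_i$ carrying the restricted inner product, $f^+_{\mathcal H_f}$ is the unique endomorphism of $E$ with $f^+_{\mathcal H_f}|_{H_i}=f_i^\dagger$ for each $i$. *)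

(* Defs.v *)
From HB Require Import structures.
From mathcomp Require Import all_boot all_order all_algebra.
From mathcomp Require Import reals.
From mathcomp Require Import complex.
From Stdlib Require Import ClassicalEpsilon.
Set Implicit Arguments. Unset Strict Implicit. Unset Printing Implicit Defensive.
Import Order.TTheory GRing.Theory Num.Theory.
Local Open Scope ring_scope.

(* Inner products on a (finite-dimensional) vector space E over a number
   field K, where [conj] is the conjugation of K (identity for k = R,
   complex conjugation for k = C). *)
Definition is_inner_product (K : numFieldType) (conj : K -> K)
  (E : vectType K) (g : E -> E -> K) : Prop :=
  [/\ (forall (a : K) (x y z : E), g (a *: x + y) z = a * g x z + g y z),
      (forall x y : E, g y x = conj (g x y))
    & (forall x : E, x != 0 -> 0 < g x x)].

Definition orth (K : numFieldType) (E : vectType K) (g : E -> E -> K)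
  (U : {vspace E}) : E -> Prop :=
  fun e => forall u, u \in U -> g u e = 0.

(* h is the Moore-Penrose inverse of f in the sense of the paper:
   h equals (f|_{[Ker f]^perp})^{-1} on Im f, and 0 on [Im f]^perp. *)
Definition is_MP_inverse (K : numFieldType) (E : vectType K)
  (g : E -> E -> K) (f h : 'End(E)) : Prop :=
  (forall y, y \in limg f -> orth g (lker f) (h y) /\ f (h y) = y) /\
  (forall y, orth g (limg f) y -> h y = 0).

Definition MPinv (K : numFieldType) (E : vectType K)
  (g : E -> E -> K) (f : 'End(E)) : 'End(E) :=
  epsilon (inhabits 0) (is_MP_inverse g f).

Definition restr_end (K : numFieldType) (E : vectType K) (H : {vspace E})
  (f : 'End(E)) : 'End(subvs_of H) :=
  linfun (fun x : subvs_of H => vsproj H (f (vsval x))).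

Definition restr_form (K : numFieldType) (E : vectType K) (H : {vspace E})
  (g : E -> E -> K) : subvs_of H -> subvs_of H -> K :=
  fun x y => g (vsval x) (vsval y).

Arguments restr_end {K E} H f.
Arguments restr_form {K E} H g.

(* Main.v *)
Require Import Defs.
From HB Require Import structures.
From mathcomp Require Import all_boot all_order all_algebra.
From mathcomp Require Import reals.
From mathcomp Require Import complex.
From Stdlib Require Import ClassicalEpsilon.
Set Implicit Arguments. Unset Strict Implicit. Unset Printing Implicit Defensive.
Import Order.TTheory GRing.Theory Num.Theory.
Local Open Scope ring_scope.

Lemma linfunE' (K : numFieldType) (aT rT : vectType K) (fn : aT -> rT)
  (hl : linear fn) x : linfun fn x = fn x.
Proof.
pose F : {linear aT -> rT} :=
  HB.pack fn (GRing.isSemilinear.Build K aT rT _ fn (GRing.semilinear_linear hl)).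
exact: (lfunE F x).
Qed.

Section Gen.
Variables (K : numFieldType) (conj : K -> K) (E : vectType K) (g : E -> E -> K).
Hypothesis conj0 : conj 0 = 0.
Hypothesis gip : is_inner_product conj g.

Lemma g0l z : g 0 z = 0.
Proof.
case: gip => lin _ _; have := lin 1 0 0 z; rewrite scale1r addr0 mul1r.
by move=> h; apply: (addrI (g 0 z)); rewrite addr0 -h.
Qed.
Lemma gDl x y z : g (x + y) z = g x z + g y z.
Proof. by case: gip => lin _ _; have := lin 1 x y z; rewrite scale1r mul1r. Qed.
Lemma gZl a x z : g (a *: x) z = a * g x z.
Proof. by case: gip => lin _ _; rewrite -(addr0 (a *: x)) lin g0l addr0. Qed.
Lemma g_suml (I : finType) (P : pred I) (F : I -> E) z :
  g (\sum_(i | P i) F i) z = \sum_(i | P i) g (F i) z.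
Proof. by elim/big_rec2: _ => [|i a b _ <-]; rewrite ?g0l ?gDl. Qed.
Lemma g_sym0 x y : g x y = 0 -> g y x = 0.
Proof. by case: gip => _ sym _ h; rewrite sym h conj0. Qed.
Lemma g_def x : g x x = 0 -> x = 0.
Proof.
case: gip => _ _ pd h; apply/eqP; apply: contraT => /pd; by rewrite h ltxx.
Qed.

Definition phi (U : {vspace E}) (e : E) : 'rV[K]_(\dim U) :=
  \row_k g e (vbasis U)`_k.
Lemma phi_lin U : linear (phi U).
Proof.
move=> a x y; apply/rowP => k; rewrite !mxE.
by case: gip => lin _ _; rewrite lin.
Qed.
Definition perp U := lker (linfun (phi U)).

Lemma perpP U e : reflect (orth g U e) (e \in perp U).
Proof.
rewrite memv_ker (linfunE' (@phi_lin U)); apply: (iffP eqP) => [h u Uu | h].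
  rewrite (coord_vbasis Uu) g_suml big1 // => k _.
  rewrite gZl; case: gip => _ sym _; rewrite sym.
  by move/rowP: h => /(_ k); rewrite !mxE => ->; rewrite conj0 mulr0.
apply/rowP => k; rewrite !mxE; apply: g_sym0; apply: h.
by apply: vbasis_mem; apply: mem_nth; rewrite size_tuple.
Qed.

Lemma perp_cap U : (U :&: perp U = 0)%VS.
Proof.
apply/vspaceP => x; rewrite memv_cap memv0; apply/andP/eqP => [[Ux /perpP h]|->].
  by apply: g_def; apply: h.
by rewrite !rpred0.
Qed.

Lemma perp_full U : (U + perp U = fullv)%VS.
Proof.
apply/eqP; rewrite eqEdim subvf /=.
rewrite dimv_disjoint_sum; last exact: perp_cap.
have := limg_ker_dim (linfun (phi U)) fullv; rewrite capfv dimvf => hd.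
have : (\dim (limg (linfun (phi U))) <= \dim U)%N.
  by apply: leq_trans (dimvS (subvf _)) _; rewrite dimvf dim_matrix mul1r.
by move=> hb; rewrite -hd addnC /perp leq_add2r.
Qed.

Lemma pi0 (U V : {vspace E}) v : (U :&: V = 0)%VS -> v \in V -> daddv_pi U V v = 0.
Proof.
move=> c Vv; have := daddv_pi_add c (subvP (addvSr U V) _ Vv).
rewrite (daddv_pi_id _ Vv); last by rewrite capvC.
by move=> h; apply: (addIr v); rewrite h add0r.
Qed.

Definition mp (f : 'End(E)) : 'End(E) :=
  (daddv_pi (perp (lker f)) (lker f) \o f^-1 \o daddv_pi (limg f) (perp (limg f)))%VF.

Lemma mp_spec f : is_MP_inverse g f (mp f).
Proof.
split => [y yf|y /perpP yp]; rewrite /mp !comp_lfunE; last first.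
  by rewrite (@pi0 (limg f) (perp (limg f))) ?perp_cap // !linear0.
rewrite (daddv_pi_id (perp_cap (limg f)) yf); set x := (f^-1)%VF y.
have fx : f x = y by rewrite limg_lfunVK.
split; first by apply/perpP; apply: memv_pi.
have c : (perp (lker f) :&: lker f = 0)%VS by rewrite capvC perp_cap.
have xin : x \in (perp (lker f) + lker f)%VS by rewrite addvC perp_full memvf.
have hx := daddv_pi_add c xin.
have : daddv_pi (lker f) (perp (lker f)) x \in lker f by apply: memv_pi.
rewrite memv_ker => /eqP h0.
by rewrite -fx -{2}hx linearD /= h0 addr0.
Qed.

Lemma mp_uniq f h1 h2 : is_MP_inverse g f h1 -> is_MP_inverse g f h2 -> h1 = h2.
Proof.
move=> [H1 H1'] [H2 H2']; apply/lfunP => y.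
have c : (limg f :&: perp (limg f) = 0)%VS by apply: perp_cap.
have yin : y \in (limg f + perp (limg f))%VS by rewrite perp_full memvf.
rewrite -(daddv_pi_add c yin).
set y1 := daddv_pi _ _ y; set y2 := daddv_pi _ _ y.
have y2p : orth g (limg f) y2 by apply/perpP; apply: memv_pi.
have y1f : y1 \in limg f by apply: memv_pi.
rewrite !linearD /= (H1' _ y2p) (H2' _ y2p) !addr0.
have [o1 e1] := H1 _ y1f; have [o2 e2] := H2 _ y1f.
apply/eqP; rewrite -subr_eq0; apply/eqP.
have : h1 y1 - h2 y1 \in (lker f :&: perp (lker f))%VS.
  rewrite memv_cap memv_ker linearB /= e1 e2 subrr eqxx /=.
  by rewrite rpredB //; apply/perpP.
by rewrite perp_cap memv0 => /eqP.
Qed.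

Lemma MPinv_spec f : is_MP_inverse g f (MPinv g f).
Proof. by apply: epsilon_spec; exists (mp f); apply: mp_spec. Qed.

Lemma MPinv_uniq f h : is_MP_inverse g f h -> h = MPinv g f.
Proof. by move=> hh; apply: mp_uniq hh (MPinv_spec f). Qed.

Lemma restr_ip (H : {vspace E}) : is_inner_product conj (restr_form H g).
Proof.
case: gip => lin sym pd; split; rewrite /restr_form.
- by move=> a x y z; rewrite linearP /= lin.
- by move=> x y; rewrite sym.
- by move=> x x0; apply: pd; apply: contra x0 => /eqP h; apply/eqP/val_inj; rewrite /= h.
Qed.
End Gen.
Lemma main_gen (K : numFieldType) (conj : K -> K) (conj0 : conj 0 = 0)
  (E : vectType K) (g : E -> E -> K) (f : 'End(E)) (n : nat)
  (H : 'I_n -> {vspace E}) (fplus : 'End(E)) :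
      is_inner_product conj g ->
      (forall i, (f @: H i <= H i)%VS) ->
      directv (\sum_(i < n) H i)%VS ->
      (\sum_(i < n) H i)%VS = fullv ->
      (forall i x, x \in H i -> orth g (\sum_(j < n | j != i) H j)%VS x) ->
      (forall i (x : subvs_of (H i)),
          fplus (vsval x) = vsval (MPinv (restr_form (H i) g) (restr_end (H i) f) x)) ->
      fplus = MPinv g f.
Proof.
move=> gip Hinv Hdir Hfull Horth Hfp.
apply: (MPinv_uniq conj0 gip).
set hi := fun i => MPinv (restr_form (H i) g) (restr_end (H i) f).
have hiP i : is_MP_inverse (restr_form (H i) g) (restr_end (H i) f) (hi i).
  exact: (MPinv_spec conj0 (restr_ip gip (H i))).
have fH i x : x \in H i -> f x \in H i.
  by move=> Hx; apply: (subvP (Hinv i)); apply: memv_img.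
have restrE i (w : subvs_of (H i)) : vsval (restr_end (H i) f w) = f (vsval w).
  rewrite /restr_end linfunE' ?vsprojK ?fH ?subvsP //.
  by move=> a u v; rewrite !linearP.
have decomp x : exists2 xs : 'I_n -> E, (forall i, xs i \in H i) & x = \sum_(i < n) xs i.
  have : x \in (\sum_(i < n) H i)%VS by rewrite Hfull memvf.
  by case/memv_sumP => xs Hxs ->; exists xs => // i; apply: Hxs.
have indep := directv_sum_independent Hdir.
split.
- move=> y /memv_imgP [x _ ->].
  have [xs Hxs ->] := decomp x.
  set y' := fun i => restr_end (H i) f (vsproj (H i) (xs i)).
  have fxsE i : f (xs i) = vsval (y' i) by rewrite restrE vsprojK.
  set z := fun i => vsval (hi i (y' i)).
  have y'in i : y' i \in limg (restr_end (H i) f) by apply: memv_img; apply: memvf.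
  have fz i : f (z i) = f (xs i).
    by rewrite /z -restrE (proj2 (proj1 (hiP i) _ (y'in i))) fxsE.
  have fpE : fplus (f (\sum_(i < n) xs i)) = \sum_(i < n) z i.
    rewrite linear_sum linear_sum; apply: eq_bigr => i _.
    by rewrite /= fxsE Hfp.
  rewrite fpE; split; last first.
    by rewrite linear_sum linear_sum; apply: eq_bigr => i _ /=; rewrite fz.
  apply/(perpP conj0 gip); apply: rpred_sum => j _; apply/(perpP conj0 gip).
  move=> u /[dup] uker; have [us Hus ->] := decomp u => uk.
  have fus i : f (us i) = 0.
    apply: (indep (fun i => f (us i))) => // [k _|]; first exact: fH (Hus k).
    by move: uk; rewrite memv_ker linear_sum => /eqP.
  rewrite (g_suml gip) (bigD1 j) //= big1 ?addr0 => [|i ij].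
    have := proj1 (proj1 (hiP j) _ (y'in j)) (vsproj (H j) (us j)).
    rewrite /restr_form vsprojK //; apply.
    rewrite memv_ker; apply/eqP; apply: subvs_inj; rewrite restrE vsprojK // fus linear0 //.
  apply: (Horth j (z j) (subvsP _)).
  by apply: (subvP (sumv_sup i _ (subvv _))).
- move=> y yo.
  have [ys Hys yE] := decomp y.
  rewrite yE linear_sum big1 // => i _.
  rewrite /= -(vsprojK (Hys i)) Hfp (proj2 (hiP i)) ?linear0 //.
  move=> w /memv_imgP [v _ ->]; rewrite /restr_form vsprojK // restrE.
  apply: (g_sym0 conj0 gip).
  have : g (\sum_(k < n) ys k) (f (vsval v)) = 0.
    by rewrite -yE; apply: (g_sym0 conj0 gip); apply: yo; apply: memv_img; apply: memvf.
  rewrite (g_suml gip) (bigD1 i) //= big1 ?addr0 // => k ki.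
  apply: (g_sym0 conj0 gip); apply: (Horth k (ys k) (Hys k)).
  apply: (subvP (sumv_sup i _ (subvv _))); first by rewrite eq_sym.
  by apply: fH; apply: subvsP.
Qed.

Theorem proposition3p9 (R : realType) :
  (forall (E : vectType R) (g : E -> E -> R) (f : 'End(E)) (n : nat)
          (H : 'I_n -> {vspace E}) (fplus : 'End(E)),
      is_inner_product id g ->
      (forall i, (f @: H i <= H i)%VS) ->
      directv (\sum_(i < n) H i)%VS ->
      (\sum_(i < n) H i)%VS = fullv ->
      (forall i x, x \in H i -> orth g (\sum_(j < n | j != i) H j)%VS x) ->
      (forall i (x : subvs_of (H i)),
          fplus (vsval x) = vsval (MPinv (restr_form (H i) g) (restr_end (H i) f) x)) ->
      fplus = MPinv g f)
  /\
  (forall (E : vectType R[i]) (g : E -> E -> R[i]) (f : 'End(E)) (n : nat)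
          (H : 'I_n -> {vspace E}) (fplus : 'End(E)),
      is_inner_product Num.conj g ->
      (forall i, (f @: H i <= H i)%VS) ->
      directv (\sum_(i < n) H i)%VS ->
      (\sum_(i < n) H i)%VS = fullv ->
      (forall i x, x \in H i -> orth g (\sum_(j < n | j != i) H j)%VS x) ->
      (forall i (x : subvs_of (H i)),
          fplus (vsval x) = vsval (MPinv (restr_form (H i) g) (restr_end (H i) f) x)) ->
      fplus = MPinv g f).
Proof.
split.
- by move=> E g f n H fplus; apply: (@main_gen R id erefl).
- move=> E g f n H fplus; apply: (@main_gen R[i] Num.conj).
  exact: conjC0.
Qed.
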